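(* Suppose $\mathcal M$ is unichain and indexable, and $\widehat{\mathcal M}$ has the same rewards and the same support as $\mathcal M$ and satisfies Assumption (A). There exists a constant $c_\alpha>0$ depending only on $\mathcal M$ such that for every state $s\in\mathcal S$ and every policy $\pi\subseteq\mathcal S$, $$|\alpha^\pi_s-\hat\alpha^\pi_s|\le c_\alpha\|\mathcal M-\widehat{\mathcal M}\|_\infty,$$ where $\alpha^\pi_s$ and $\hat\alpha^\pi_s$ are the activation advantages of $s$ under $\pi$ in $\mathcal M$ and $\widehat{\mathcal M}$ respectively. (One may take $c_\alpha=\max_\pi\{\mathrm{sp}(b^\pi)+8D(P^\pi)\mathrm{sp}(b^\pi)+\tfrac12\mathrm{sp}(b^{\pi,1})\}$, where $b^{\pi,1}$ solves $b^{\pi,1}=b^\pi+P^\pi b^{\pi,1}$.)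
   Context: Setting. An MDP is $\mathcal M=(\mathcal S,\{0,1\},(P^a)_a,(r^a)_a)$, finite $\mathcal S$, row-stochastic $P^0,P^1$, rewards $r^0,r^1\in\mathbb R^{\mathcal S}$. A policy is a subset $\pi\subseteq\mathcal S$ of states where action 1 is played, inducing $P^\pi$, $r^\pi$; $\mathcal M$ is unichain if every $P^\pi$ has a single recurrent class. For a unichain policy, gain $g^\pi$ and bias $b^\pi$ (up to an additive constant) solve $g^\pi\mathbf 1+b^\pi=r^\pi+P^\pi b^\pi$; the activation advantage is $\alpha^\pi_s=r^1_s-r^0_s+(P^1_{s,\cdot}-P^0_{s,\cdot})\cdot b^\pi$. For $\lambda\in\mathbb R$, $\mathcal M(\lambda)$ has the same transitions and rewards $r^1-\lambda\mathbf 1$, $r^0$, with advantages $\alpha^\pi_s(\lambda)$ defined likewise (including the term $-\lambda$). BO (bias optimal) policy in $\mathcal M(\lambda)$: gain optimal and bias-maximal among gain-optimal policies; for unichain MDPs, $\pi$ is BO iff $\alpha^\pi_s(\lambda)\ge0$ for $s\in\pi$, $\le0$ for $s\notin\pi$. $\alpha^*_s(\lambda)$ is $\alpha^\pi_s(\lambda)$ for any BO $\pi$. $\mathcal M$ indexable: for each $s$ there is $\lambda_s$ (Whittle index) with $\alpha^*_s(\lambda)>0$ for $\lambda<\lambda_s$ and $<0$ for $\lambda>\lambda_s$. Hats denote objects in $\widehat{\mathcal M}=(\mathcal S,\{0,1\},(\hat P^a)_a,(r^a)_a)$. $\|A\|_\infty=\max_s\sum_{s'}|A_{s,s'}|$;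 $\|\mathcal M-\widehat{\mathcal M}\|_\infty=\max_a\|P^a-\hat P^a\|_\infty$. Same support: $P^a_{s,s'}>0\iff\hat P^a_{s,s'}>0$. $\mathrm{sp}(v)=\max v-\min v$. Diameter of unichain $P$ with recurrent class $\mathcal S_r$: $D(P)=\max_{s\in\mathcal S,s'\in\mathcal S_r}\mathbb E^P[\tau_{s,s'}]$. Assumption (A): $\|\mathcal M-\widehat{\mathcal M}\|_\infty\le\min\{1/\max_\pi D(P^\pi),\ \tfrac12\min\{|\lambda_s-\lambda_{s'}|:\lambda_s\ne\lambda_{s'}\}\}$. *)

(* Defs.v *)
From HB Require Import structures.
From mathcomp Require Import all_boot all_order all_algebra.
From mathcomp Require Import all_classical all_reals all_analysis.
Set Implicit Arguments. Unset Strict Implicit. Unset Printing Implicit Defensive.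
Import Order.TTheory GRing.Theory Num.Theory.
Local Open Scope ring_scope.

(* Two-action MDP on the state space 'I_n; action 1 = "active", 0 = "passive".
   A policy is a set pi of states where action 1 is played. *)

Section MDP.
Variables (R : realType) (n : nat).

Definition stochastic (P : 'M[R]_n) : Prop :=
  (forall i j, 0 <= P i j) /\ (forall i, \sum_j P i j = 1).

Definition Ppol (P0 P1 : 'M[R]_n) (pi : {set 'I_n}) : 'M[R]_n :=
  \matrix_(i, j) (if i \in pi then P1 i j else P0 i j).
Definition rpol (r0 r1 : 'I_n -> R) (pi : {set 'I_n}) : 'I_n -> R :=
  fun i => if i \in pi then r1 i else r0 i.

Definition acc (P : 'M[R]_n) : rel 'I_n := fun i j => 0 < P i j.
Definition recurrent (P : 'M[R]_n) (i : 'I_n) : bool :=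
  [forall j, connect (acc P) i j ==> connect (acc P) j i].
Definition unichain (P : 'M[R]_n) : Prop :=
  forall i j, recurrent P i -> recurrent P j -> connect (acc P) i j.
Definition mdp_unichain (P0 P1 : 'M[R]_n) : Prop :=
  forall pi : {set 'I_n}, unichain (Ppol P0 P1 pi).

Definition same_support (P Ph : 'M[R]_n) : Prop :=
  forall i j, (0 < P i j) <-> (0 < Ph i j).

Definition gain_bias (P0 P1 : 'M[R]_n) (r0 r1 : 'I_n -> R) (pi : {set 'I_n})
  (g : R) (b : 'I_n -> R) : Prop :=
  forall s, g + b s = rpol r0 r1 pi s + \sum_j Ppol P0 P1 pi s j * b j.

Definition stationary (P : 'M[R]_n) (mu : 'I_n -> R) : Prop :=
  [/\ forall i, 0 <= mu i, \sum_i mu i = 1 & forall j, \sum_i mu i * P i j = mu j].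

(* the bias proper: the solution normalised by  P^* b = 0  (mu . b = 0) *)
Definition gain_bias_norm (P0 P1 : 'M[R]_n) (r0 r1 : 'I_n -> R)
  (pi : {set 'I_n}) (g : R) (b : 'I_n -> R) : Prop :=
  gain_bias P0 P1 r0 r1 pi g b /\
  exists mu, stationary (Ppol P0 P1 pi) mu /\ \sum_i mu i * b i = 0.

Definition BO (P0 P1 : 'M[R]_n) (r0 r1 : 'I_n -> R) (pi : {set 'I_n}) : Prop :=
  exists g b, gain_bias_norm P0 P1 r0 r1 pi g b /\
  forall (pi' : {set 'I_n}) g' b', gain_bias_norm P0 P1 r0 r1 pi' g' b' ->
    g' <= g /\ (g' = g -> forall s, b' s <= b s).

Definition advantage (P0 P1 : 'M[R]_n) (r0 r1 : 'I_n -> R) (b : 'I_n -> R)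
  (s : 'I_n) : R :=
  r1 s - r0 s + \sum_j (P1 s j - P0 s j) * b j.

Definition rlam (r1 : 'I_n -> R) (lam : R) : 'I_n -> R := fun s => r1 s - lam.

Definition whittle_index (P0 P1 : 'M[R]_n) (r0 r1 : 'I_n -> R) (s : 'I_n)
  (lam_s : R) : Prop :=
  forall lam : R,
    (lam < lam_s -> forall pi g b, BO P0 P1 r0 (rlam r1 lam) pi ->
        gain_bias P0 P1 r0 (rlam r1 lam) pi g b ->
        0 < advantage P0 P1 r0 (rlam r1 lam) b s) /\
    (lam_s < lam -> forall pi g b, BO P0 P1 r0 (rlam r1 lam) pi ->
        gain_bias P0 P1 r0 (rlam r1 lam) pi g b ->
        advantage P0 P1 r0 (rlam r1 lam) b s < 0).

Definition mnorm (A : 'M[R]_n) : R := \big[Num.max/0]_i \sum_j `|A i j|.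
Definition model_dist (P0 P1 P0h P1h : 'M[R]_n) : R :=
  Num.max (mnorm (P0 - P0h)) (mnorm (P1 - P1h)).

(* surv P s' t i = P_i(tau_{s'} > t), tau_{s'} = min {t >= 1 : X_t = s'} *)
Fixpoint surv (P : 'M[R]_n) (s' : 'I_n) (t : nat) : 'I_n -> R :=
  match t with
  | 0 => fun _ => 1
  | t.+1 => fun i => \sum_(j | j != s') P i j * surv P s' t j
  end.

(* E_s[tau_{s'}] = sum_{t >= 0} P_s(tau_{s'} > t) *)
Definition expected_hit (P : 'M[R]_n) (s s' : 'I_n) : R :=
  limn (fun N => \sum_(0 <= t < N) surv P s' t s).

Definition diameter (P : 'M[R]_n) : R :=
  \big[Num.max/0]_s \big[Num.max/0]_(s' | recurrent P s') expected_hit P s s'.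

Definition max_diameter (P0 P1 : 'M[R]_n) : R :=
  \big[Num.max/0]_(pi : {set 'I_n}) diameter (Ppol P0 P1 pi).

(* Assumption (A); the min over distinct index pairs (empty min = +oo) is
   expressed pairwise *)
Definition assumptionA (P0 P1 P0h P1h : 'M[R]_n) (lam : 'I_n -> R) : Prop :=
  model_dist P0 P1 P0h P1h <= 1 / max_diameter P0 P1 /\
  (forall s s', lam s != lam s' -> model_dist P0 P1 P0h P1h <= `|lam s - lam s'| / 2).

End MDP.

(* Main.v *)
Require Import Defs.
From HB Require Import structures.
From mathcomp Require Import all_boot all_order all_algebra.
From mathcomp Require Import all_classical all_reals all_analysis.
From mathcomp Require Import lra ring.
Import Order.TTheory GRing.Theory Num.Theory.
Local Open Scope ring_scope.
Set Implicit Arguments. Unset Strict Implicit.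

Section H1.
Variables (R : realType) (n : nat).
Implicit Types (P : 'M[R]_n).

Lemma ex_argmax (i0 : 'I_n) (x : 'I_n -> R) : exists i, forall j, x j <= x i.
Proof.
case: (@arg_maxP _ _ _ i0 predT x) => // i _ H; exists i => j; exact: H.
Qed.

Lemma ex_argmin (i0 : 'I_n) (x : 'I_n -> R) : exists i, forall j, x i <= x j.
Proof.
case: (@arg_minP _ _ _ i0 predT x) => // i _ H; exists i => j; exact: H.
Qed.

Lemma ex_recurrent P (i : 'I_n) : exists2 r, recurrent P r & connect (acc P) i r.
Proof.
case: (@arg_minnP _ i (fun j => connect (acc P) i j)
   (fun j => #|[set k | connect (acc P) j k]|)) => //.
move=> j ij Hmin; exists j => //.
apply/forallP => k; apply/implyP => jk.
have sub : [set l | connect (acc P) k l] \subset [set l | connect (acc P) j l].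
  by apply/fintype.subsetP => l; rewrite !inE; apply: connect_trans.
have le := Hmin k (connect_trans ij jk).
have E : [set l | connect (acc P) j l] \subset [set l | connect (acc P) k l].
  by rewrite -(subset_leqif_card sub).2 eqn_leq le (subset_leq_card sub).
have : j \in [set l | connect (acc P) j l] by rewrite inE connect0.
by move/(fintype.subsetP E); rewrite inE.
Qed.

End H1.

Section H2.
Variables (R : realType) (n : nat).
Implicit Types (P : 'M[R]_n).

Lemma sum_mul_const P i (c : R) : stochastic P -> \sum_j P i j * c = c.
Proof. by case=> _ h; rewrite -mulr_suml h mul1r. Qed.

Lemma harm_step P (x : 'I_n -> R) i j : stochastic P ->
  x i = \sum_k P i k * x k -> (forall k, x k <= x i) -> 0 < P i j -> x j = x i.
Proof.
move=> [P0 P1] hi hmax pij.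
have : \sum_k P i k * (x i - x k) = 0.
  under eq_bigr do rewrite mulrBr.
  by rewrite sumrB -mulr_suml P1 mul1r -hi subrr.
move/psumr_eq0P => H.
have H' : forall k, true -> 0 <= P i k * (x i - x k).
  by move=> k _; rewrite mulr_ge0 // subr_ge0.
have /eqP := H H' j isT.
by rewrite mulf_eq0 (gt_eqF pij) /= subr_eq0 => /eqP ->.
Qed.

Lemma harm_closed P (x : 'I_n -> R) i j : stochastic P ->
  (forall k, x k = \sum_l P k l * x l) -> (forall k, x k <= x i) ->
  connect (acc P) i j -> x j = x i.
Proof.
move=> sP hx hmax /connectP [p pth ->].
elim: p i pth hmax => //= a p IH i /andP [ia pth] hmax.
have ea : x a = x i := harm_step sP (hx i) hmax ia.
rewrite (IH a pth) // => k; rewrite ea; exact: hmax.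
Qed.

Lemma unique_bias P (r : 'I_n -> R) g b g' b' : stochastic P -> unichain P ->
  (forall i, g + b i = r i + \sum_j P i j * b j) ->
  (forall i, g' + b' i = r i + \sum_j P i j * b' j) ->
  forall j s, b j - b' j = b s - b' s.
Proof.
move=> sP uP hb hb' j s.
pose x i := b i - b' i.
have hx : forall i, (g - g') + x i = \sum_k P i k * x k.
  move=> i; rewrite /x; under eq_bigr do rewrite mulrBr.
  rewrite sumrB; have := hb i; have := hb' i; lra.
have [imax Hmax] := ex_argmax j x.
have [imin Hmin] := ex_argmin j x.
have sumle : forall i, \sum_k P i k * x k <= x imax.
  move=> i; rewrite -(sum_mul_const i (x imax) sP); apply: ler_sum => k _.
  by apply: ler_wpM2l; [case: sP|].
have sumge : forall i, x imin <= \sum_k P i k * x k.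
  move=> i; rewrite -(sum_mul_const i (x imin) sP); apply: ler_sum => k _.
  by apply: ler_wpM2l; [case: sP|].
have gg : g - g' = 0.
  apply/eqP; rewrite eq_le; apply/andP; split.
    by have := hx imax; have := sumle imax; lra.
  by have := hx imin; have := sumge imin; lra.
have hx' : forall k, x k = \sum_l P k l * x l by move=> k; rewrite -hx gg add0r.
have [r1 rec1 c1] := ex_recurrent P imax.
have [r2 rec2 c2] := ex_recurrent P imin.
have e1 : x r1 = x imax := harm_closed sP hx' Hmax c1.
pose y k := - x k.
have hy : forall k, y k = \sum_l P k l * y l.
  by move=> k; rewrite /y hx' -sumrN; apply: eq_bigr => l _; rewrite mulrN.
have Hmy : forall k, y k <= y imin by move=> k; rewrite /y lerN2.
have e2 : y r2 = y imin := harm_closed sP hy Hmy c2.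
have e3 : x r2 = x imax.
  rewrite -e1; apply: (harm_closed sP hx'); last exact: uP.
  by move=> k; rewrite e1.
have : x imax = x imin by rewrite /y in e2; lra.
move=> E.
have : x imin <= x j <= x imax by rewrite Hmin Hmax.
have : x imin <= x s <= x imax by rewrite Hmin Hmax.
rewrite E; rewrite /x; lra.
Qed.

End H2.

Section H3.
Variables (R : realType) (n : nat).
Implicit Types (P : 'M[R]_n).

Definition Asum P s' N i := \sum_(0 <= t < N) surv P s' t i.

Lemma surv_S P s' t i : surv P s' t.+1 i = \sum_(j | j != s') P i j * surv P s' t j.
Proof. by []. Qed.

Lemma sum_rest_le1 P i (F : 'I_n -> R) (s' : 'I_n) : stochastic P ->
  (forall j, 0 <= F j <= 1) -> \sum_(j | j != s') P i j * F j <= 1.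
Proof.
move=> [P0 P1] hF; apply: (le_trans (y := \sum_j P i j)); last by rewrite P1.
rewrite [X in _ <= X](bigID (fun j => j != s')) /= -[X in X <= _]addr0.
apply: lerD; last by apply: sumr_ge0.
apply: ler_sum => j _; have := hF j; have := P0 i j; nra.
Qed.

Lemma surv_bnd P s' t i : stochastic P -> 0 <= surv P s' t i <= 1.
Proof.
move=> sP; elim: t i => [|t IH] i /=; first by rewrite ler01 lexx.
apply/andP; split; last exact: sum_rest_le1.
apply: sumr_ge0 => j _; apply: mulr_ge0; first by case: sP.
by case/andP: (IH j).
Qed.

Lemma surv_noninc P s' t i : stochastic P -> surv P s' t.+1 i <= surv P s' t i.
Proof.
move=> sP; elim: t i => [|t IH] i; first by case/andP: (surv_bnd s' 1 i sP).
rewrite surv_S [X in _ <= X]surv_S; apply: ler_sum => j _.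
apply: ler_wpM2l; [by case: sP | exact: IH].
Qed.

Lemma surv_anti P s' t u i : stochastic P -> (t <= u)%N -> surv P s' u i <= surv P s' t i.
Proof.
move=> sP /subnK <-; elim: (u - t)%N => [|k IH] //; rewrite addSn.
exact: le_trans (surv_noninc _ _ _ sP) IH.
Qed.

Lemma Asum_S P s' N i : Asum P s' N.+1 i = 1 + \sum_(j | j != s') P i j * Asum P s' N j.
Proof.
rewrite /Asum big_nat_recl //=; congr (_ + _).
under [RHS]eq_bigr do rewrite big_distrr /=.
rewrite exchange_big /=; apply: eq_bigr => t _; by [].
Qed.

Lemma Asum_ge0 P s' N i : stochastic P -> 0 <= Asum P s' N i.
Proof. by move=> sP; apply: sumr_ge0 => t _; case/andP: (surv_bnd s' t i sP). Qed.

Lemma Asum_mono P s' N M i : stochastic P -> (N <= M)%N -> Asum P s' N i <= Asum P s' M i.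
Proof.
move=> sP NM; rewrite /Asum (@big_cat_nat _ _ _ N 0 M) /= ?lerDl //.
by apply: sumr_ge0 => t _; case/andP: (surv_bnd s' t i sP).
Qed.

Lemma Asum_le P s' N i : stochastic P -> Asum P s' N i <= N%:R.
Proof.
move=> sP; rewrite /Asum; apply: (le_trans (y := \sum_(0 <= t < N) (1 : R))).
  by apply: ler_sum => t _; case/andP: (surv_bnd s' t i sP).
by rewrite sumr_const_nat subn0.
Qed.

Lemma Asum_ge_mul P s' N i : stochastic P -> N.+1%:R * surv P s' N i <= Asum P s' N.+1 i.
Proof.
move=> sP; rewrite /Asum; apply: (le_trans (y := \sum_(0 <= t < N.+1) surv P s' N i)).
  by rewrite sumr_const_nat subn0 mulr_natl.
apply: ler_sum_nat => t /andP [_ tN]; apply: surv_anti => //.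
Qed.

End H3.

Section H4.
Variables (R : realType) (n : nat) (P : 'M[R]_n) (s' : 'I_n).
Hypothesis sP : stochastic P.

Lemma ex_pmin : exists p : R, [/\ 0 < p, p <= 1 & forall i j, 0 < P i j -> p <= P i j].
Proof.
exists (\prod_(ij : 'I_n * 'I_n | 0 < P ij.1 ij.2) P ij.1 ij.2).
have le1 : forall i j, P i j <= 1.
  move=> i j; case: sP => P0 P1; rewrite -(P1 i) (bigD1 j) //= lerDl.
  by apply: sumr_ge0.
split.
- by apply: prodr_gt0 => ij.
- by apply: prodr_ile1 => ij /ltW ->; rewrite le1.
- move=> i j pij; rewrite (bigD1 (i, j)) //= ler_piMr //; first exact: ltW.
  by apply: prodr_ile1 => ij /andP [/ltW -> _]; rewrite le1.
Qed.

Lemma row_pos i : exists j, 0 < P i j.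
Proof.
apply: contrapT => h.
case: sP => P0 P1; have := P1 i.
rewrite big1; last first.
  move=> j _; apply/eqP; rewrite eq_le P0 andbT leNgt; apply/negP => pj; apply: h; by exists j.
by move/esym/eqP; rewrite oner_eq0.
Qed.

Lemma sum_rest i : \sum_(l | l != s') P i l = 1 - P i s'.
Proof. case: sP => _ P1; have := P1 i; rewrite (bigD1 s') //=; lra. Qed.

Fixpoint inS (k : nat) (i : 'I_n) : bool :=
  if k is k'.+1 then [exists j, (0 < P i j) && ((j == s') || inS k' j)] else false.

Lemma inS_mono k i : inS k i -> inS k.+1 i.
Proof.
elim: k i => // k IH i /= /existsP [j /andP [pj h]].
apply/existsP; exists j; rewrite pj andTb; case/orP: h => [js|/IH hk].
  by rewrite js.
  by apply/orP; right.
Qed.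

Lemma inS_le k k' i : (k <= k')%N -> inS k i -> inS k' i.
Proof. move=> /subnK <-; elim: (k' - k)%N => //= m IH h; exact: inS_mono (IH h). Qed.

Lemma path_inS p i : path (acc P) i p -> last i p = s' -> p != [::] -> inS (size p) i.
Proof.
elim: p i => // j p IH i /= /andP [pij pth] hl _.
apply/existsP; exists j; rewrite /acc in pij; rewrite pij andTb.
case: p IH pth hl => [|k p] IH pth hl; first by rewrite /= in hl; rewrite hl eqxx.
apply/orP; right; exact: IH.
Qed.

Hypothesis reach : forall i, connect (acc P) i s'.

Lemma inS_ex i : exists k, inS k i.
Proof.
have [j pj] := row_pos i.
case: (eqVneq j s') => [ejs|jn]; first by exists 1%N; apply/existsP; exists j; rewrite pj ejs eqxx.
have /connectP [p pth hl] := reach j.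
have pne : p != [::].
  case: p pth hl => //= _ ejs; by move: jn; rewrite ejs eqxx.
exists (size p).+1; apply/existsP; exists j; rewrite pj andTb; apply/orP; right.
exact: path_inS.
Qed.

Lemma inS_all : exists K, forall i, inS K i.
Proof.
have [f hf] := fin_all_exists inS_ex.
exists (\max_i f i)%N => i; apply: inS_le (hf i); exact: leq_bigmax.
Qed.

Variable p : R.
Hypotheses (p0 : 0 < p) (p1 : p <= 1) (pmin : forall i j, 0 < P i j -> p <= P i j).

Lemma surv_inS k i t : inS k i -> (k <= t)%N -> surv P s' t i <= 1 - p ^+ k.
Proof.
elim: k i t => // k IH i [|t] //= /existsP [j /andP [pj hj]] kt.
have pk1 : p ^+ k.+1 <= p.
  by rewrite exprS; apply: ler_piMr; [exact: ltW | exact: exprn_ile1 (ltW p0) p1].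
have Pis : forall l, 0 <= P i l by case: sP.
case: (eqVneq j s') => [ejs|jn].
  apply: (le_trans (y := \sum_(l | l != s') P i l)).
    apply: ler_sum => l _; have := surv_bnd s' t l sP; have := Pis l; nra.
  rewrite sum_rest; have := pmin pj; rewrite ejs; lra.
move: hj; rewrite (negbTE jn) orFb => hj.
rewrite (bigD1 j) //=.
have hj' := IH j t hj kt.
have hjb := surv_bnd s' t j sP.
have rest : \sum_(l | (l != s') && (l != j)) P i l * surv P s' t l <= 1 - P i j.
  case: sP => _ P1.
  have -> : 1 - P i j = \sum_(l | l != j) P i l by have := P1 i; rewrite (bigD1 j) //=; lra.
  rewrite [X in X <= _]big_mkcond [X in _ <= X]big_mkcond; apply: ler_sum => l _.
  case: (l != j); rewrite ?andbT ?andbF //.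
  case: (l != s') => //; have := surv_bnd s' t l sP; have := Pis l; nra.
have := pmin pj; have := Pis j.
have pkk : 0 <= p ^+ k by rewrite exprn_ge0 // ltW.
rewrite exprS; nra.
Qed.

Fixpoint iterQ (t : nat) (v : 'I_n -> R) : 'I_n -> R :=
  if t is t'.+1 then fun i => \sum_(j | j != s') P i j * iterQ t' v j else v.

Lemma iterQ_surv t i : surv P s' t i = iterQ t (fun _ => 1) i.
Proof. by elim: t i => //= t IH i; apply: eq_bigr => j _; rewrite IH. Qed.

Lemma iterQ_comp t K v i : iterQ t (iterQ K v) i = iterQ (t + K) v i.
Proof. by elim: t i => //= t IH i; apply: eq_bigr => j _; rewrite IH. Qed.

Lemma iterQ_mono t v w i : (forall j, v j <= w j) -> iterQ t v i <= iterQ t w i.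
Proof.
move=> h; elim: t i => //= t IH i; apply: ler_sum => j _.
by apply: ler_wpM2l; [case: sP|].
Qed.

Lemma iterQ_scale t c v i : iterQ t (fun j => c * v j) i = c * iterQ t v i.
Proof.
elim: t i => //= t IH i; rewrite mulr_sumr; apply: eq_bigr => j _.
by rewrite IH mulrCA.
Qed.

Lemma Asum_bounded : exists C : R, forall N i, Asum P s' N i <= C.
Proof.
have [K hK] := inS_all.
set rho := 1 - p ^+ K.
have pK : 0 < p ^+ K by rewrite exprn_gt0.
have dec : forall t i, surv P s' (t + K) i <= rho * surv P s' t i.
  move=> t i; rewrite iterQ_surv -iterQ_comp iterQ_surv.
  rewrite -[X in _ <= X]iterQ_scale; apply: iterQ_mono => j; rewrite mulr1.
  rewrite -iterQ_surv; exact: surv_inS (hK j) (leqnn K).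
exists (K%:R / p ^+ K) => N i.
have e : Asum P s' (N + K) i = Asum P s' K i + \sum_(0 <= t < N) surv P s' (t + K) i.
  rewrite /Asum (@big_cat_nat _ _ _ K) //= ?leq_addl //.
  congr (_ + _).
  have -> : \sum_(K <= t < N + K) surv P s' t i = \sum_(0 + K <= t < N + K) surv P s' t i by rewrite add0n.
  by rewrite big_addn addnK.
have h1 : Asum P s' N i <= Asum P s' (N + K) i by apply: Asum_mono => //; apply: leq_addr.
have h2 : \sum_(0 <= t < N) surv P s' (t + K) i <= rho * Asum P s' N i.
  rewrite /Asum mulr_sumr; apply: ler_sum => t _; exact: dec.
have h3 := Asum_le s' K i sP.
rewrite ler_pdivlMr //; move: h1 h2 h3; rewrite e /rho; nra.
Qed.

End H4.

Section H5.
Variables (R : realType) (n : nat).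

Lemma stoch_pol (P0 P1 : 'M[R]_n) pi : stochastic P0 -> stochastic P1 -> stochastic (Ppol P0 P1 pi).
Proof.
move=> [a0 b0] [a1 b1]; split.
  by move=> i j; rewrite /Ppol mxE; case: ifP.
move=> i; rewrite /Ppol; under eq_bigr do rewrite mxE.
by case: (i \in pi).
Qed.

Lemma reach_rec (P : 'M[R]_n) s' : unichain P -> recurrent P s' -> forall i, connect (acc P) i s'.
Proof.
move=> uP rs i; have [r rr ir] := ex_recurrent P i.
exact: connect_trans ir (uP _ _ rr rs).
Qed.

Lemma Asum_le_hit (P : 'M[R]_n) s' : stochastic P -> unichain P -> recurrent P s' ->
  forall M i, Asum P s' M i <= expected_hit P i s'.
Proof.
move=> sP uP rs M i.
have reach := reach_rec uP rs.
have [p [p0 p1 pm]] := ex_pmin sP.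
have [C hC] := Asum_bounded sP reach p0 p1 pm.
pose u := fun N => Asum P s' N i.
have nd : nondecreasing_seq u.
  move=> a b ab; rewrite /u; exact: (Asum_mono s' i sP ab).
have ub : has_ubound (range u).
  exists C; move=> _ [N _ <-]; exact: hC.
have cu : cvgn u := nondecreasing_is_cvgn nd ub.
exact: (nondecreasing_cvgn_le nd cu M).
Qed.

Lemma Asum_le_maxdiam (P0 P1 : 'M[R]_n) pi s' :
  stochastic P0 -> stochastic P1 -> mdp_unichain P0 P1 -> recurrent (Ppol P0 P1 pi) s' ->
  forall M i, Asum (Ppol P0 P1 pi) s' M i <= max_diameter P0 P1.
Proof.
move=> s0 s1 u rs M i.
apply: le_trans (Asum_le_hit (stoch_pol pi s0 s1) (u pi) rs M i) _.
rewrite /max_diameter /diameter.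
apply: le_trans (le_bigmax _ _ pi).
apply: le_trans (le_bigmax _ _ i).
exact: (le_bigmax_cond _ _ rs).
Qed.

End H5.

Section H6.
Variables (R : realType) (n : nat).

Lemma ex_nat (x : R) : exists N : nat, x <= N%:R.
Proof.
case: (lerP 0 x) => hx; last by exists 0%N; rewrite ltW.
by exists (Num.bound x); apply: ltW; apply: archi_boundP.
Qed.

Lemma half_bound (a w : 'I_n -> R) (eps W : R) : 0 <= W ->
  \sum_j a j = 0 -> \sum_j `|a j| <= eps -> (forall j, 0 <= w j <= W) ->
  \sum_j a j * w j <= eps * W / 2.
Proof.
move=> W0 s0 sa hw.
have -> : \sum_j a j * w j = \sum_j a j * (w j - W / 2).
  under [RHS]eq_bigr do rewrite mulrBr.
  by rewrite sumrB -mulr_suml s0 mul0r subr0.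
apply: (le_trans (y := \sum_j `|a j| * (W / 2))).
  apply: ler_sum => j _; apply: (le_trans (ler_norm _)).
  rewrite normrM; apply: ler_wpM2l => //.
  case/andP: (hw j) => h1 h2; rewrite ler_norml; apply/andP; split; lra.
rewrite -mulr_suml mulrA; apply: ler_wpM2r; first by rewrite invr_ge0.
exact: ler_wpM2r.
Qed.

Lemma abs_sum_bound (a x : 'I_n -> R) (eps B : R) : 0 <= B ->
  \sum_j `|a j| <= eps -> (forall j, `|x j| <= B) ->
  `|\sum_j a j * x j| <= eps * B.
Proof.
move=> B0 sa hx; apply: (le_trans (ler_norm_sum _ _ _)).
apply: (le_trans (y := \sum_j `|a j| * B)).
  by apply: ler_sum => j _; rewrite normrM; apply: ler_wpM2l.
by rewrite -mulr_suml; apply: ler_wpM2r.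
Qed.

End H6.

Section H7.
Variables (R : realType) (n : nat) (P Ph : 'M[R]_n) (s' : 'I_n) (D eps : R).
Hypotheses (sP : stochastic P) (sPh : stochastic Ph).
Hypothesis hD : forall M i, Asum P s' M i <= D.
Hypothesis he : forall i, \sum_j `|Ph i j - P i j| <= eps.
Hypothesis eD : eps * D <= 1.

Lemma D_ge1 : 1 <= D.
Proof.
have := hD 1 s'; rewrite /Asum big_nat1 /=; done.
Qed.

Lemma eps_ge0 : 0 <= eps.
Proof. apply: le_trans (he s'); exact: sumr_ge0. Qed.

Lemma rowdiff0 i : \sum_j (Ph i j - P i j) = 0.
Proof. case: sP => _ a; case: sPh => _ b; by rewrite sumrB a b subrr. Qed.

Lemma surv_small (Q : 'M[R]_n) (c : R) : stochastic Q -> 0 < c ->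
  (forall N i, Asum Q s' N i <= c * D) ->
  exists M, forall i, surv Q s' M i <= c / 6.
Proof.
move=> sQ c0 hQ; have [M hM] := ex_nat (6 * D).
exists M => i.
have h1 := Asum_ge_mul s' M i sQ.
have h2 := hQ M.+1 i.
have hs := surv_bnd s' M i sQ.
have D1 := D_ge1.
have hM' : 6 * D <= M.+1%:R by rewrite -addn1 natrD; lra.
case/andP: hs => hs0 hs1.
rewrite ler_pdivlMr //.
have : M.+1%:R * surv Q s' M i <= c * D by lra.
nra.
Qed.

Lemma Ahat_bound : forall N i, Asum Ph s' N i <= 3 * D.
Proof.
have hD1 : forall N i, Asum P s' N i <= 1 * D by move=> N i; rewrite mul1r.
have [M0 hM0] := @surv_small P 1 sP ltr01 hD1.
pose v j := 3 * Asum P s' M0 j.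
have e0 := eps_ge0.
have step : forall i, 1 + \sum_(j | j != s') Ph i j * v j <= v i.
  move=> i.
  have eA : Asum P s' M0.+1 i = Asum P s' M0 i + surv P s' M0 i.
    by rewrite /Asum big_nat_recr.
  have eQ := Asum_S P s' M0 i.
  have split1 : \sum_(j | j != s') Ph i j * v j =
     \sum_(j | j != s') P i j * v j + \sum_j (Ph i j - P i j) * (if j == s' then 0 else v j).
    rewrite [X in _ = _ + X](bigD1 s') //= eqxx mulr0 add0r.
    rewrite -big_split /=; apply: eq_bigr => j js; rewrite (negbTE js); ring.
  have hv : \sum_(j | j != s') P i j * v j = 3 * (Asum P s' M0.+1 i - 1).
    rewrite eQ (addrC 1) addrK mulr_sumr; apply: eq_bigr => j _; rewrite /v; ring.
  have hb : \sum_j (Ph i j - P i j) * (if j == s' then 0 else v j) <= eps * (3 * D) / 2.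
    apply: half_bound; first by have := D_ge1; lra.
    - exact: rowdiff0.
    - exact: he.
    move=> j; case: (j == s'); first by rewrite lexx /=; have := D_ge1; lra.
    rewrite /v; have := Asum_ge0 s' M0 j sP; have := hD M0 j; move=> a b; apply/andP; split; lra.
  have hb' : eps * (3 * D) / 2 = 3 / 2 * (eps * D) by ring.
  have vi : v i = 3 * Asum P s' M0 i by [].
  have := hM0 i; rewrite split1 hv eA vi.
  move: hb; rewrite hb'; move: eD; set ED := eps * D; set X := \sum_j _; lra.
have main : forall N i, Asum Ph s' N i <= v i.
  elim=> [|N IH] i; first by rewrite /Asum big_geq // /v; have := Asum_ge0 s' M0 i sP; lra.
  rewrite Asum_S; apply: le_trans (step i); rewrite lerD2l; apply: ler_sum => j _.
  by apply: ler_wpM2l; [case: sPh|].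
move=> N i; apply: le_trans (main N i) _; rewrite /v; have := hD M0 i; lra.
Qed.

Lemma core (g gh : R) (b bh r : 'I_n -> R) (B : R) :
  0 <= B -> (forall j, `|b j - b s'| <= B) ->
  (forall i, g + b i = r i + \sum_j P i j * b j) ->
  (forall i, gh + bh i = r i + \sum_j Ph i j * bh j) ->
  forall j, `|(bh j - bh s') - (b j - b s')| <= 12 * eps * B * D.
Proof.
move=> B0 hB hb hbh.
have e0 := eps_ge0.
have D1 := D_ge1.
pose d j := bh j - b j.
pose x j := b j - b s'.
pose e i := \sum_j (Ph i j - P i j) * x j.
have he' : forall i, `|e i| <= eps * B := fun i => abs_sum_bound B0 (he i) hB.
have eE : forall i, e i = \sum_j Ph i j * b j - \sum_j P i j * b j.
  move=> i; rewrite /e /x; under eq_bigr do rewrite mulrBr.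
  rewrite sumrB -mulr_suml rowdiff0 mul0r subr0.
  by under eq_bigr do rewrite mulrBl; rewrite sumrB.
have sPhd : forall i, \sum_j Ph i j * d j = \sum_j Ph i j * bh j - \sum_j Ph i j * b j.
  by move=> i; rewrite /d; under eq_bigr do rewrite mulrBr; rewrite sumrB.
have hd : forall i, (gh - g) + d i = \sum_j Ph i j * d j + e i.
  move=> i; rewrite sPhd eE /d; have := hb i; have := hbh i; lra.
have [imax Hmax] := ex_argmax s' d.
have [imin Hmin] := ex_argmin s' d.
have sumle : forall i, \sum_k Ph i k * d k <= d imax.
  move=> i; rewrite -(sum_mul_const i (d imax) sPh); apply: ler_sum => k _.
  by apply: ler_wpM2l; [case: sPh|].
have sumge : forall i, d imin <= \sum_k Ph i k * d k.
  move=> i; rewrite -(sum_mul_const i (d imin) sPh); apply: ler_sum => k _.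
  by apply: ler_wpM2l; [case: sPh|].
have dg : `|gh - g| <= eps * B.
  have h1 := hd imax; have h2 := hd imin; have h3 := sumle imax; have h4 := sumge imin.
  have := he' imax; have := he' imin; rewrite !ler_norml => /andP [a1 a2] /andP [a3 a4].
  apply/andP; split; lra.
pose u j := d j - d s'.
pose f i := e i - (gh - g).
have hf : forall i, `|f i| <= 2 * eps * B.
  move=> i; have := he' i; move: dg; rewrite /f !ler_norml => /andP [a1 a2] /andP [a3 a4].
  apply/andP; split; lra.
have hu : forall i, u i = f i + \sum_(j | j != s') Ph i j * u j.
  move=> i.
  have : \sum_j Ph i j * u j = \sum_(j | j != s') Ph i j * u j.
    by rewrite (bigD1 s') //= /u subrr mulr0 add0r.
  move=> <-; rewrite /u; under eq_bigr do rewrite mulrBr.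
  rewrite sumrB (sum_mul_const i _ sPh) /f; have := hd i; lra.
have [im Him] := ex_argmax s' (fun j => `|u j|).
set U := `|u im| in Him.
have claim : forall N i, `|u i| <= 2 * eps * B * Asum Ph s' N i + U * surv Ph s' N i.
  elim=> [|N IH] i.
    by rewrite /Asum big_geq //= mulr0 add0r mulr1; exact: Him.
  rewrite Asum_S surv_S hu.
  apply: (le_trans (ler_normD _ _)).
  have h2 : `|\sum_(j | j != s') Ph i j * u j| <=
     \sum_(j | j != s') Ph i j * (2 * eps * B * Asum Ph s' N j + U * surv Ph s' N j).
    apply: (le_trans (ler_norm_sum _ _ _)); apply: ler_sum => j _.
    rewrite normrM ger0_norm; last by case: sPh.
    by apply: ler_wpM2l; [case: sPh|].
  have h3 : \sum_(j | j != s') Ph i j * (2 * eps * B * Asum Ph s' N j + U * surv Ph s' N j) =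
     2 * eps * B * \sum_(j | j != s') Ph i j * Asum Ph s' N j +
     U * \sum_(j | j != s') Ph i j * surv Ph s' N j.
    rewrite !mulr_sumr -big_split /=; apply: eq_bigr => j _; ring.
  have := hf i; move: h2; rewrite h3; lra.
have Ah := Ahat_bound.
have h3 : forall N i, Asum Ph s' N i <= 3 * D := Ah.
have three : (0:R) < 3 by [].
have [N1 hN1] := @surv_small Ph 3 sPh three h3.
have U0 : 0 <= U by exact: normr_ge0.
have := claim N1 im.
have a1 : 2 * eps * B * Asum Ph s' N1 im <= 2 * eps * B * (3 * D).
  apply: ler_wpM2l; last exact: Ah.
  by rewrite !mulr_ge0.
have a2 : U * surv Ph s' N1 im <= U * (3 / 6) by apply: ler_wpM2l.
move=> hU j.
have -> : (bh j - bh s') - (b j - b s') = u j by rewrite /u /d; ring.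
apply: le_trans (Him j) _.
move: a1 a2 hU; set X := eps * B * D.
have -> : 2 * eps * B * (3 * D) = 6 * X by rewrite /X; ring.
have -> : 12 * eps * B * D = 12 * X by rewrite /X; ring.
move=> a1' a2' hU'.
have hU2 : U <= 2 * eps * B * Asum Ph s' N1 im + U * surv Ph s' N1 im := hU'.
have : U * (3 / 6) = U / 2 by field.
lra.
Qed.

End H7.

Section H8.
Variables (R : realType) (n : nat).
Implicit Types (P Q : 'M[R]_n).

Lemma row_le_mnorm (A : 'M[R]_n) i : \sum_j `|A i j| <= mnorm A.
Proof. exact: (le_bigmax _ (fun i => \sum_j `|A i j|) i). Qed.

Lemma row_dist0 (P0 P1 P0h P1h : 'M[R]_n) i :
  \sum_j `|P0h i j - P0 i j| <= model_dist P0 P1 P0h P1h.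
Proof.
apply: (le_trans (y := mnorm (P0 - P0h))); last by rewrite /model_dist le_max lexx.
apply: le_trans (row_le_mnorm (P0 - P0h) i).
by apply: ler_sum => j _; rewrite !mxE distrC.
Qed.

Lemma row_dist1 (P0 P1 P0h P1h : 'M[R]_n) i :
  \sum_j `|P1h i j - P1 i j| <= model_dist P0 P1 P0h P1h.
Proof.
apply: (le_trans (y := mnorm (P1 - P1h))); last by rewrite /model_dist le_max lexx orbT.
apply: le_trans (row_le_mnorm (P1 - P1h) i).
by apply: ler_sum => j _; rewrite !mxE distrC.
Qed.

Lemma row_distpol (P0 P1 P0h P1h : 'M[R]_n) pi i :
  \sum_j `|Ppol P0h P1h pi i j - Ppol P0 P1 pi i j| <= model_dist P0 P1 P0h P1h.
Proof.
rewrite /Ppol; under eq_bigr do rewrite !mxE.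
case: (i \in pi); [exact: row_dist1 | exact: row_dist0].
Qed.

Lemma adv_shift (P0 P1 : 'M[R]_n) r0 r1 (b : 'I_n -> R) s s' :
  stochastic P0 -> stochastic P1 ->
  advantage P0 P1 r0 r1 b s = r1 s - r0 s + \sum_j (P1 s j - P0 s j) * (b j - b s').
Proof.
move=> [_ h0] [_ h1]; rewrite /advantage; congr (_ + _).
under [RHS]eq_bigr do rewrite mulrBr.
by rewrite sumrB -mulr_suml sumrB h0 h1 subrr mul0r subr0.
Qed.

Lemma adv_bound (P0 P1 P0h P1h : 'M[R]_n) r0 r1 (b bh : 'I_n -> R) s s' eps B U :
  stochastic P0 -> stochastic P1 -> stochastic P0h -> stochastic P1h ->
  \sum_j `|P0h s j - P0 s j| <= eps -> \sum_j `|P1h s j - P1 s j| <= eps ->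
  0 <= B -> 0 <= U ->
  (forall j, `|b j - b s'| <= B) ->
  (forall j, `|(bh j - bh s') - (b j - b s')| <= U) ->
  `|advantage P0 P1 r0 r1 b s - advantage P0h P1h r0 r1 bh s| <= 2 * eps * B + 2 * U.
Proof.
move=> s0 s1 s0h s1h e0 e1 B0 U0 hB hU.
rewrite (adv_shift r0 r1 b s s' s0 s1) (adv_shift r0 r1 bh s s' s0h s1h).
pose x j := b j - b s'. pose y j := bh j - bh s'.
have -> : r1 s - r0 s + \sum_j (P1 s j - P0 s j) * x j -
   (r1 s - r0 s + \sum_j (P1h s j - P0h s j) * y j) =
   \sum_j ((P1 s j - P0 s j) - (P1h s j - P0h s j)) * x j +
   \sum_j (P1h s j - P0h s j) * (x j - y j).
  rewrite -big_split /=.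
  have -> : forall a c d : R, a + c - (a + d) = c - d by move=> *; ring.
  rewrite -sumrB; apply: eq_bigr => j _; ring.
apply: (le_trans (ler_normD _ _)); apply: lerD.
  have := @abs_sum_bound R n (fun j => (P1 s j - P0 s j) - (P1h s j - P0h s j)) x (2 * eps) B B0.
  apply => //.
  apply: (le_trans (y := \sum_j (`|P1h s j - P1 s j| + `|P0h s j - P0 s j|))).
    apply: ler_sum => j _; apply: (le_trans _ (ler_normB _ _)); rewrite le_eqVlt; apply/orP; left.
    apply/eqP; rewrite -normrN; congr `|_|; ring.
  rewrite big_split /=; lra.
have := @abs_sum_bound R n (fun j => P1h s j - P0h s j) (fun j => x j - y j) 2 U U0.
apply.
  apply: (le_trans (y := \sum_j (P1h s j + P0h s j))).
    apply: ler_sum => j _; apply: (le_trans (ler_normB _ _)).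
    case: s0h => a _; case: s1h => c _; by rewrite !ger0_norm.
  case: s0h => _ a; case: s1h => _ c; rewrite big_split /= a c; lra.
by move=> j; rewrite distrC; exact: hU.
Qed.

End H8.

Section H9.
Variables (R : realType) (n : nat) (P0 P1 : 'M[R]_n) (r0 r1 : 'I_n -> R) (lam : 'I_n -> R).
Hypotheses (s0 : stochastic P0) (s1 : stochastic P1) (uni : mdp_unichain P0 P1).

Definition GoalPi (pi : {set 'I_n}) (c : R) : Prop :=
    forall P0h P1h : 'M[R]_n,
      stochastic P0h -> stochastic P1h ->
      same_support P0 P0h -> same_support P1 P1h ->
      assumptionA P0 P1 P0h P1h lam ->
      forall (s : 'I_n) (g : R) (b : 'I_n -> R)
             (gh : R) (bh : 'I_n -> R),
        gain_bias P0 P1 r0 r1 pi g b ->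
        gain_bias P0h P1h r0 r1 pi gh bh ->
        `|advantage P0 P1 r0 r1 b s - advantage P0h P1h r0 r1 bh s|
          <= c * model_dist P0 P1 P0h P1h.

Lemma per_pi (i0 : 'I_n) pi : exists c, 0 < c /\ GoalPi pi c.
Proof.
pose P := Ppol P0 P1 pi.
have sP : stochastic P := stoch_pol pi s0 s1.
have [s' rs _] := ex_recurrent P i0.
have [B [B0 hB]] : exists B : R, 0 <= B /\ forall g b, gain_bias P0 P1 r0 r1 pi g b ->
    forall j, `|b j - b s'| <= B.
  case: (pselect (exists g b, gain_bias P0 P1 r0 r1 pi g b)) => [[g0 [b0 h0]]|nex].
    exists (\sum_j `|b0 j - b0 s'|); split; first exact: sumr_ge0.
    move=> g b h j.
    have e : b j - b s' = b0 j - b0 s'.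
      have uP : unichain P := @uni pi.
      have := unique_bias sP uP h h0 j s'; lra.
    rewrite e; rewrite (bigD1 j) //= lerDl; exact: sumr_ge0.
  exists 0; split => // g b h; exfalso; apply: nex; by exists g, b.
set D := max_diameter P0 P1.
exists (2 * B + 24 * B * D + 1); split.
  have hD : 1 <= D by have := Asum_le_maxdiam s0 s1 uni rs 1 s'; rewrite /Asum big_nat1.
  have : 0 <= B * D by rewrite mulr_ge0 //; lra.
  lra.
move=> P0h P1h s0h s1h _ _ [hA _] s g b gh bh hgb hgbh.
pose Ph := Ppol P0h P1h pi.
have sPh : stochastic Ph := stoch_pol pi s0h s1h.
set eps := model_dist P0 P1 P0h P1h.
have hD : forall M i, Asum P s' M i <= D := Asum_le_maxdiam s0 s1 uni rs.
have he : forall i, \sum_j `|Ph i j - P i j| <= eps := fun i => row_distpol P0 P1 P0h P1h pi i.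
have D1 : 1 <= D by have := hD 1%N s'; rewrite /Asum big_nat1.
have eD : eps * D <= 1.
  by move: hA; rewrite -/eps -/D ler_pdivlMr ?mul1r //; lra.
have e0 : 0 <= eps by apply: le_trans (he s'); exact: sumr_ge0.
have hU := core sP sPh hD he eD B0 (hB _ _ hgb) hgb hgbh.
have U0 : 0 <= 12 * eps * B * D by rewrite !mulr_ge0 //; lra.
have H := adv_bound r0 r1 s0 s1 s0h s1h (row_dist0 P0 P1 P0h P1h s)
  (row_dist1 P0 P1 P0h P1h s) B0 U0 (hB _ _ hgb) hU.
apply: le_trans H _.
have -> : 2 * eps * B + 2 * (12 * eps * B * D) = (2 * B + 24 * B * D) * eps by ring.
by apply: ler_wpM2r => //; lra.
Qed.

End H9.

Unset Implicit Arguments.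

Theorem mainTheorem5 (R : realType) (n : nat) (P0 P1 : 'M[R]_n)
  (r0 r1 : 'I_n -> R) (lam : 'I_n -> R) :
  stochastic P0 -> stochastic P1 -> mdp_unichain P0 P1 ->
  (forall s, whittle_index P0 P1 r0 r1 s (lam s)) ->
  exists c : R, 0 < c /\
    forall P0h P1h : 'M[R]_n,
      stochastic P0h -> stochastic P1h ->
      same_support P0 P0h -> same_support P1 P1h ->
      assumptionA P0 P1 P0h P1h lam ->
      forall (pi : {set 'I_n}) (s : 'I_n) (g : R) (b : 'I_n -> R)
             (gh : R) (bh : 'I_n -> R),
        gain_bias P0 P1 r0 r1 pi g b ->
        gain_bias P0h P1h r0 r1 pi gh bh ->
        `|advantage P0 P1 r0 r1 b s - advantage P0h P1h r0 r1 bh s|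
          <= c * model_dist P0 P1 P0h P1h.
Proof.
move=> s0 s1 uni _.
case: n P0 P1 r0 r1 lam s0 s1 uni => [|m] P0 P1 r0 r1 lam s0 s1 uni.
  by exists 1; split => // P0h P1h _ _ _ _ _ pi [].
have [f hf] := fin_all_exists (fun pi : {set 'I_m.+1} => per_pi r0 r1 lam s0 s1 uni ord0 pi).
exists (\sum_pi f pi); split.
  rewrite (bigD1 (finset.set0 : {set 'I_m.+1})) //=; have := (hf finset.set0).1.
  have : 0 <= \sum_(i | i != (finset.set0 : {set 'I_m.+1})) f i.
    by apply: sumr_ge0 => i _; apply: ltW; exact: (hf i).1.
  lra.
move=> P0h P1h a b c d e pi s g bb gh bh h1 h2.
apply: le_trans ((hf pi).2 P0h P1h a b c d e s g bb gh bh h1 h2) _.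
apply: ler_wpM2r.
  apply: le_trans (row_dist0 P0 P1 P0h P1h s); exact: sumr_ge0.
rewrite (bigD1 pi) //= lerDl; apply: sumr_ge0 => i _; apply: ltW; exact: (hf i).1.
Qed.
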